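(* Let $G$ be a finite group with $|G|\geq3$. Let $\mathcal{C}$ be a cycle of $\mathcal{P}(G)$ of maximum length. Then $\ell(\mathcal{C})\geq\max_{x\in G} o(x)$.
   Context: The power graph $\mathcal{P}(G)$ has vertex set $G$, and distinct $x,y$ are adjacent iff one is a positive integer power of the other. A cycle is a subgraph whose $k\ge3$ distinct vertices can be arranged cyclically with consecutive vertices adjacent; its length $\ell(\mathcal{C})$ is its number of edges ($=k$). $o(x)$ is the order of $x$. *)

(* Defs.v *)
From mathcomp Require Import all_boot all_fingroup.
Set Implicit Arguments. Unset Strict Implicit. Unset Printing Implicit Defensive.
Local Open Scope group_scope.

Definition pow_adj (gT : finGroupType) (x y : gT) : Prop :=
  x <> y /\ ((exists k : nat, (0 < k)%N /\ x = y ^+ k) \/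
             (exists k : nat, (0 < k)%N /\ y = x ^+ k)).

(* A cycle of P(G): a list of k >= 3 distinct vertices, consecutive ones
   (cyclically) adjacent. Its length is the number of vertices = number of edges. *)
Definition is_pow_cycle (gT : finGroupType) (s : seq gT) : Prop :=
  uniq s /\ (3 <= size s)%N /\
  (forall i : nat, (i < size s)%N -> pow_adj (nth 1 s i) (nth 1 s (i.+1 %% size s))).

Definition cycle_length (gT : finGroupType) (s : seq gT) : nat := size s.

(* Main.v *)
Require Import Defs.
From mathcomp Require Import all_boot all_fingroup.
From mathcomp Require Import all_solvable zify.


Definition cmp (a b : nat) : bool := (a %| b) || (b %| a).
Definition rep (c : nat) (s : seq nat) : seq nat := flatten (map (nseq c) s).

Lemma cmp_refl a : cmp a a. Proof. by rewrite /cmp dvdnn. Qed.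

Lemma size_rep c s : size (rep c s) = c * size s.
Proof. elim: s => [|y s IH] /=; first by rewrite muln0. by rewrite size_cat size_nseq IH mulnS. Qed.

Lemma count_rep c s d : count_mem d (rep c s) = c * count_mem d s.
Proof.
elim: s => [|y s IH] /=; first by rewrite muln0.
by rewrite count_cat count_nseq IH mulnDr mulnC.
Qed.

Lemma path_nseq x c y : cmp x y -> path cmp x (nseq c y).
Proof.
move=> h; case: c => //= c; rewrite h /=.
by elim: c => //= c IH; rewrite cmp_refl IH.
Qed.

Lemma last_nseq (x y : nat) c : last x (nseq c.+1 y) = y.
Proof. by elim: c => //= c. Qed.

Lemma path_rep c x s : 0 < c -> path cmp x s -> path cmp x (rep c s).
Proof.
case: c => // c _; elim: s x => [|y s IH] x //= /andP[hxy hs].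
rewrite cat_path path_nseq //= ?cmp_refl // hxy /=.
have -> : last y (nseq c y) = y by elim: c {IH}.
exact: IH.
Qed.

Lemma last_rep c x s : 0 < c -> last x (rep c s) = last x s.
Proof.
case: c => // c _; elim: s x => [|y s IH] x //=.
rewrite last_cat /= -IH.
have -> : last y (nseq c y) = y by elim: c {IH}.
by [].
Qed.

Lemma path_scale q x s : 0 < q -> path cmp (q * x) (map (muln q) s) = path cmp x s.
Proof.
move=> q0; apply: mono_path => a b; by rewrite /cmp !dvdn_pmul2l.
Qed.

Lemma count_scale q d s : 0 < q -> count_mem (q * d) (map (muln q) s) = count_mem d s.
Proof.
move=> q0; rewrite count_map; apply: eq_count => y /=.
by rewrite /= eqn_pmul2l.
Qed.

Lemma count_scale0 q d s : ~~ (q %| d) -> count_mem d (map (muln q) s) = 0.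
Proof.
move=> h; apply/eqP; rewrite -leqn0 leqNgt -has_count; apply/hasP => -[y] /mapP [z _ ->] /eqP E.
by move: h; rewrite -E dvdn_mulr.
Qed.

Definition Lprop (n : nat) (s : seq nat) :=
  [/\ path cmp 1 s, last 1 s = n, size s = n.-1 &
      forall d, count_mem d (1 :: s) <= (if d %| n then totient d else 0)].

Lemma Lexists n : 0 < n -> exists s, Lprop n s.
Proof.
elim/ltn_ind: n => n IH n0.
have [n1|n1] := leqP n 1.
  have -> : n = 1 by lia.
  exists [::]; split => // d /=; rewrite dvdn1 addn0.
  by case: eqP => [<-|] //; case: eqP => // <-.
set p := max_pdiv n.
have pp : prime p by apply: max_pdiv_prime.
have p2 : 1 < p by apply: prime_gt1.
have [m cpm En] := pfactor_coprime pp n0.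
set a := logn p n in En.
have a0 : 0 < a by rewrite logn_gt0 mem_primes pp n0 max_pdiv_dvd.
set q := p ^ a in En.
have q0 : 0 < q by rewrite expn_gt0 (ltnW p2).
have m0 : 0 < m by move: n0; rewrite En; case: m {cpm En} => //.
have qp : q = p * p ^ a.-1 by rewrite /q -expnS prednK.
have pa0 : 0 < p ^ a.-1 by rewrite expn_gt0 (ltnW p2).
set k := m * p ^ a.-1.
have kn : k < n by rewrite En qp /k; nia.
have mn : m < n by rewrite En qp; nia.
set c := totient q.
have cE : c = p.-1 * p ^ a.-1 by rewrite /c /q totient_pfactor.
have c0 : 0 < c by rewrite cE; nia.
have cm : (1 < c) || (m == 1).
  case: (ltnP 1 m) => m1; last by rewrite orbC (_ : m == 1) //; apply/eqP; lia.
  apply/orP; left.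
  have qq : pdiv m \in \pi(n).
    rewrite mem_primes pdiv_prime // n0 En dvdn_mulr // pdiv_dvd //.
  have := max_pdiv_max qq; rewrite -/p => le.
  have : pdiv m != p.
    apply/eqP => E; have := pdiv_dvd m; rewrite E => /gcdn_idPl pm.
    by move: cpm; rewrite /coprime pm; case: (p) p2 => // [[]].
  move=> ne; have p3 : 2 < p.
    have := prime_gt1 (pdiv_prime m1) => h; lia.
  rewrite cE; have : 1 < p.-1 by lia. nia.
have k0 : 0 < k by rewrite /k muln_gt0 m0.
have [sk [pk lk zk ck]] := IH k kn k0.
have [sm [pm lm zm cm']] := IH m mn m0.
set u := belast 1 sm.
have Eu : 1 :: sm = rcons u m by rewrite -lm /u -lastI.
set T := rep c u ++ nseq c.-1 m.
have pT : path cmp m T.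
  have : path cmp m (rcons u m) by rewrite -Eu /= pm andbT /cmp dvd1n orbT.
  rewrite rcons_path => /andP [pu lu].
  rewrite cat_path path_rep // last_rep //=.
  by apply: path_nseq.
have lT : last m T = m.
  rewrite /T last_cat last_rep //.
  case/orP: cm => [c1|/eqP m1].
    case: (c) c1 => [|[|j]] //= _; elim: j => //.
  have -> : u = [::] by rewrite /u; case: (sm) zm; rewrite m1 // => ??.
  by rewrite /=; elim: (c.-1).
have sT : size T = c * m - 1.
  rewrite /T size_cat size_rep size_nseq.
  have : size u = m.-1 by rewrite /u size_belast zm.
  move=> ->; nia.
have cT d : count_mem d (m :: T) = c * count_mem d (1 :: sm).
  rewrite Eu -cats1 /T /= count_cat count_rep count_cat /= count_nseq /= addn0; nia.
exists (sk ++ map (muln q) (m :: T)); split.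
- rewrite cat_path pk lk /= -/(map (muln q) T) path_scale // pT andbT.
  by rewrite /cmp /k qp mulnC -mulnA dvdn_mull // dvdn_mulr.
- rewrite last_cat lk /= -/(map (muln q) T) last_map lT En mulnC //.
- rewrite size_cat zk /= size_map sT En qp cE /k.
  have : 0 < p.-1 by lia.
  move=> h; nia.
- move=> d; rewrite -cat_cons count_cat.
  have kn' : k %| n by rewrite En qp /k mulnCA dvdn_mull.
  have [/dvdnP [e de]|nqd] := boolP (q %| d); last first.
    rewrite count_scale0 // addn0; apply: leq_trans (ck d) _.
    case: ifP => dk //; by rewrite (dvdn_trans dk kn').
  rewrite de mulnC count_scale // cT.
  have nqk : ~~ (q * e %| k).
    apply/negP => h; have : q %| k by apply: dvdn_trans h; apply: dvdn_mulr.
    rewrite qp /k (mulnC p) (mulnC m) dvdn_pmul2l // => pm'.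
    by move: cpm; rewrite /coprime (gcdn_idPl pm'); case: (p) p2 => // [[]].
  have := ck (q * e); rewrite (negbTE nqk) leqn0 => /eqP ->; rewrite add0n.
  rewrite En [m * q]mulnC dvdn_pmul2l //.
  case: ifP => em; last by have := cm' e; rewrite em leqn0 => /eqP ->; rewrite muln0.
  have cqe : coprime q e by rewrite /q coprime_pexpl // (coprime_dvdr em cpm).
  rewrite totient_coprime //; apply: leq_mul => //.
  by have := cm' e; rewrite em.
Qed.


Section G.
Variable gT : finGroupType.
Variable x : gT.
Local Notation n := #[x]%g.
Definition Gd (d : nat) := <[x ^+ (n %/ d)]>%g.
Definition elems (d : nat) := enum [set y | generator (Gd d) y].

Lemma card_Gd d : d %| n -> #|Gd d| = d.
Proof.
move=> dn; rewrite /Gd -orderE orderXdiv ?dvdn_div // divnA // mulKn //.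
Qed.

Lemma size_elems d : d %| n -> size (elems d) = totient d.
Proof.
move=> dn; rewrite /elems -cardE /Gd.
have := totient_gen (x ^+ (n %/ d)); rewrite [#[_]%g]orderE -/(Gd d) card_Gd // => ->.
Qed.

Lemma elems_gen d y : y \in elems d -> Gd d = <[y]>%g.
Proof. by rewrite /elems mem_enum inE /generator => /eqP. Qed.

Lemma elems_sub d e y z : d %| n -> e %| n -> d %| e -> y \in elems d -> z \in elems e ->
  y \in <[z]>%g.
Proof.
move=> dn en de /elems_gen Ey /elems_gen Ez.
have : <[y]>%g \subset <[z]>%g.
  rewrite -Ey -Ez -(cardSg_cyclic (cycle_cyclic x)) ?card_Gd // /Gd cycleX //.
by move/subsetP; apply; apply: cycle_id.
Qed.

End G.
Arguments Gd {gT}. Arguments elems {gT}. Arguments card_Gd {gT}. Arguments size_elems {gT}. Arguments elems_gen {gT x d y}. Arguments elems_sub {gT x d e y z}.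

Lemma in_cycle_pow (gT : finGroupType) (y z : gT) : y \in <[z]>%g -> exists k, 0 < k /\ y = (z ^+ k)%g.
Proof.
case/cycleP => i ->; exists (i + #[z])%g; split; first by rewrite addn_gt0 order_gt0 orbT.
by rewrite expgD expg_order mulg1.
Qed.

Lemma count_take_mono (T : eqType) (s : seq T) d i j :
  i <= j -> count_mem d (take i s) <= count_mem d (take j s).
Proof.
move=> ij; rewrite -(take_takel s ij) -{2}(cat_take_drop i (take j s)) count_cat.
exact: leq_addr.
Qed.

Lemma count_take_step (T : eqType) (x0 : T) (s : seq T) i :
  i < size s -> count_mem (nth x0 s i) (take i.+1 s) = (count_mem (nth x0 s i) (take i s)).+1.
Proof.
move=> hi; rewrite (take_nth x0 hi) -cats1 count_cat /= eqxx; lia.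
Qed.

Lemma count_take_le (T : eqType) (s : seq T) d i : count_mem d (take i s) <= count_mem d s.
Proof. by rewrite -{2}(cat_take_drop i s) count_cat leq_addr. Qed.

Local Open Scope group_scope.

Theorem mainTheorem4 (gT : finGroupType) (C : seq gT) :
  (3 <= #|[set: gT]|)%N ->
  is_pow_cycle C ->
  (forall D : seq gT, is_pow_cycle D -> (cycle_length D <= cycle_length C)%N) ->
  forall x : gT, (#[x] <= cycle_length C)%N.
Proof.
move=> _ hC hmax x.
have [n2|n3] := leqP #[x] 2.
  case: hC => _ [h _]; rewrite /cycle_length; lia.
have [s [ps ls zs cs]] := @Lexists _ (order_gt0 x).
set L := 1%N :: s.
have zL : size L = #[x] by rewrite /= zs prednK ?order_gt0.
pose f i := nth 1 (elems x (nth 0%N L i)) (count_mem (nth 0%N L i) (take i L)).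
pose D := map f (iota 0 (size L)).
have hdiv i : (i < size L)%N -> (nth 0%N L i %| #[x])%N.
  move=> hi; have := cs (nth 0%N L i); rewrite -/L.
  case: ifP => // _; rewrite leqn0 => /eqP /count_memPn.
  by rewrite mem_nth.
have hidx i : (i < size L)%N -> (count_mem (nth 0%N L i) (take i L) < size (elems x (nth 0%N L i)))%N.
  move=> hi; rewrite size_elems ?hdiv //.
  have := cs (nth 0%N L i); rewrite -/L hdiv //; apply: leq_trans.
  by rewrite -count_take_step // count_take_le.
have hin i : (i < size L)%N -> f i \in elems x (nth 0%N L i).
  by move=> hi; apply: mem_nth; apply: hidx.
have hord i : (i < size L)%N -> #[f i] = nth 0%N L i.
  move=> hi; rewrite orderE -(elems_gen (hin i hi)) card_Gd ?hdiv //.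
have hinj i j : (i < size L)%N -> (j < size L)%N -> f i = f j -> i = j.
  move=> hi hj E.
  have Ed : nth 0%N L i = nth 0%N L j by rewrite -hord // -hord // E.
  have Ec : count_mem (nth 0%N L i) (take i L) = count_mem (nth 0%N L i) (take j L).
    move: E; rewrite /f -Ed => /eqP; rewrite nth_uniq ?enum_uniq ?hidx //; first by move/eqP.
    by rewrite Ed hidx.
  have [ij|ij|//] := ltngtP i j; exfalso.
    by have := @count_take_mono _ L (nth 0%N L i) _ _ ij; rewrite count_take_step // -Ec ltnn.
  by have := @count_take_mono _ L (nth 0%N L j) _ _ ij; rewrite count_take_step // -Ed Ec ltnn.
have zD : size D = #[x] by rewrite size_map size_iota.
have nthD i : (i < size L)%N -> nth 1 D i = f i.
  by move=> hi; rewrite (nth_map 0%N) ?size_iota // nth_iota.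
suff hD : is_pow_cycle D by have := hmax D hD; rewrite /cycle_length zD.
split; [|split].
- rewrite map_inj_in_uniq ?iota_uniq // => i j; rewrite !mem_iota /= => hi hj; exact: hinj.
- by rewrite zD.
move=> i; rewrite size_map size_iota => hi.
have hij : (i.+1 < size L /\ i.+1 %% size L = i.+1) \/ (i.+1 = size L /\ i.+1 %% size L = 0)%N.
  case: (ltnP i.+1 (size L)) => h; first by left; rewrite modn_small.
  right; have E : i.+1 = size L by apply/eqP; rewrite eqn_leq h hi.
  by split => //; rewrite E modnn.
set j := (i.+1 %% size L)%N.
have hj : (j < size L)%N by rewrite ltn_mod zL order_gt0.
have ij : i != j.
  rewrite /j; case: hij => [[_ ->]|[E ->]]; first by rewrite neq_ltn ltnSn.
  by move: E n3; rewrite zL; lia.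
have hc : cmp (nth 0%N L i) (nth 0%N L j).
  rewrite /j; case: hij => [[h ->]|[_ ->]]; last by rewrite /cmp /= dvd1n orbT.
  by move/pathP: ps => /(_ 0%N i h).
rewrite !nthD //; split.
  by move=> E; move: ij; rewrite (hinj _ _ hi hj E) eqxx.
case/orP: hc => h; [left|right]; apply: in_cycle_pow.
  exact: elems_sub (hdiv i hi) (hdiv j hj) h (hin i hi) (hin j hj).
exact: elems_sub (hdiv j hj) (hdiv i hi) h (hin j hj) (hin i hi).
Qed.
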